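(* Let $p$ and $q$ be distinct primes and $m>1$ an integer. Suppose $G$ is a finite non-abelian semi-direct product of a normal abelian Sylow $p$-subgroup $P$ by a cyclic $q$-complement $Q$, where $P$ is the direct product of a cyclic group $C$ of order $p^m$ and an elementary abelian $p$-group $A$. Suppose $Q$ centralises $C$ and acts (by conjugation) irreducibly on $A$, and that $|G:\mathbf{C}_G(P)|=q$. Then $G$ is exponent-critical.
   Context: A finite group $G$ is exponent-critical if $\exp(G)$ is not the least common multiple of the exponents of the proper non-abelian subgroups of $G$. *)

(* Defs.v *)
From mathcomp Require Import all_boot all_fingroup all_solvable.
Set Implicit Arguments. Unset Strict Implicit. Unset Printing Implicit Defensive.
Local Open Scope group_scope.

Definition exponent_critical (gT : finGroupType) (G : {group gT}) : bool :=
  exponent G != \big[lcmn/1%N]_(H : {group gT} | (H \proper G) && ~~ abelian H)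
                   exponent H.

(* Main.v *)
Require Import Defs.
From mathcomp Require Import all_boot all_fingroup all_solvable.
Local Open Scope group_scope.

Lemma biglcm_pfactor (I : finType) (Pr : pred I) (F : I -> nat) p k :
  prime p -> (0 < k)%N -> (forall i, Pr i -> 0 < F i)%N ->
  (p ^ k %| \big[lcmn/1%N]_(i | Pr i) F i)%N -> exists2 i, Pr i & (p ^ k %| F i)%N.
Proof.
move=> pp k0 Fpos H.
case: (boolP [exists i, Pr i && (p ^ k %| F i)%N]) => [/existsP[i /andP[? ?]]|/existsPn nex]; first by exists i.
exfalso; move: H; apply/negP.
suff: (0 < \big[lcmn/1%N]_(i | Pr i) F i)%N && ~~ (p ^ k %| \big[lcmn/1%N]_(i | Pr i) F i)%N.
  by case/andP.
apply: (big_ind (fun n => (0 < n)%N && ~~ (p ^ k %| n)%N)).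
- rewrite /= dvdn1; apply/eqP=> e.
  have : (1 < p ^ k)%N by rewrite -(expn0 p) ltn_exp2l ?prime_gt1.
  by rewrite e.
- move=> a b /andP[a0 na] /andP[b0 nb]; rewrite lcmn_gt0 a0 b0 /=.
  rewrite !pfactor_dvdn // ?lcmn_gt0 ?a0 // in na nb *.
  by rewrite -!ltnNge in na nb; rewrite logn_lcm // -ltnNge gtn_max na nb.
- by move=> i Pi; rewrite Fpos //=; move: (nex i); rewrite Pi.
Qed.

Lemma qpow_aux q k a b : prime q -> (a %| q ^ k)%N -> a != (q ^ k)%N ->
  (b * q = q ^ k)%N -> (a %| b)%N.
Proof.
move=> pq /(dvdn_pfactor _ _ pq)[i lei ->] ne.
case: k lei ne => [|k] lei ne E.
  by move: E (prime_gt1 pq); rewrite expn0 => /eqP; rewrite muln_eq1 => /andP[_ /eqP->].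
have -> : b = (q ^ k)%N.
  by apply/eqP; rewrite -(eqn_pmul2r (prime_gt0 pq)) -expnSr E.
rewrite dvdn_exp2l //; rewrite leq_eqVlt in lei; case/orP: lei => [/eqP e|//].
by rewrite e eqxx in ne.
Qed.

Theorem mainTheorem9 (gT : finGroupType) (p q m : nat)
    (G P Q C A : {group gT}) :
  prime p -> prime q -> p != q -> (1 < m)%N ->
  ~~ abelian G ->
  p.-Sylow(G) P -> P <| G -> abelian P ->
  cyclic Q -> q.-group Q ->
  P ><| Q = G ->
  C \x A = P -> cyclic C -> #|C| = (p ^ m)%N -> p.-abelem A ->
  Q \subset 'C(C) ->
  acts_irreducibly Q A 'J ->
  #|G : 'C_G(P)| = q ->
  exponent_critical G.
Proof.
move=> pp pq npq m1 nabG sylP nPG abP cycQ qQ defG defP cycC cardC abelA cQC irr iCP.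
have [_ sQG eqPQ nPQ tiPQ] := sdprod_context defG.
have sPG : P \subset G by case/andP: nPG.
have [_ eqCA cCA tiCA] := dprodP defP.
have sCP : C \subset P by rewrite -eqCA mulG_subl.
have sAP : A \subset P by rewrite -eqCA mulG_subr.
case/mingroupP: irr => /andP[ntA]; rewrite astabsJ => nAQ minA.
have nAG : G \subset 'N(A) by rewrite -eqPQ mul_subG // sub_abelian_norm.
have derGA : G^`(1) \subset A.
  apply: (der1_min nAG).
  rewrite -eqPQ -eqCA quotientMl; last by rewrite eqCA (subset_trans sPG nAG).
  rewrite quotientMidr abelianM.
  apply/and3P; split; [apply: quotient_abelian; exact: cyclic_abelian|apply: quotient_abelian; exact: cyclic_abelian|].
  exact: quotient_cents.
have defN : 'C_G(P) = P * (Q :&: 'C(P)).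
  by rewrite group_modl // -eqPQ setIC.
have cardN : #|'C_G(P)| = (#|P| * #|Q :&: 'C(P)|)%N.
  by rewrite defN TI_cardMg //; apply/trivgP; rewrite -tiPQ setIS // subsetIl.
have cardQ0 : (#|Q :&: 'C(P)| * q)%N = #|Q|.
  have := Lagrange (subsetIl G 'C(P)); rewrite iCP cardN -(sdprod_card defG).
  by rewrite -mulnA => /eqP; rewrite eqn_pmul2l ?cardG_gt0 // => /eqP.
have L1 : forall K : {group gT}, K \subset G -> P \subset K ->
    ~~ (K \subset 'C(P)) -> K :=: G.
  move=> K sKG sPK nCK.
  have defK : P * (Q :&: K) = K by rewrite group_modl // eqPQ; apply/setIidPr.
  case sQK : (Q \subset K).
    by apply/eqP; rewrite eqEsubset sKG -eqPQ mul_subG.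
  have sXQ0 : Q :&: K \subset Q :&: 'C(P).
    rewrite -(cardSg_cyclic cycQ) ?subsetIl //.
    apply: (@qpow_aux q (logn q #|Q|) _ _ pq).
    - by rewrite -card_pgroup // cardSg ?subsetIl.
    - rewrite -card_pgroup //; apply/negP => /eqP e.
      have : Q :&: K = Q by apply/eqP; rewrite eqEcard subsetIl e leqnn.
      by move/setIidPl; rewrite sQK.
    - by rewrite -card_pgroup.
  case/negP: nCK; rewrite -defK mul_subG //.
  exact: subset_trans sXQ0 (subsetIr _ _).
have abN : abelian (P * (Q :&: 'C(P))).
  rewrite abelianM abP (abelianS (subsetIl _ _)) ?cyclic_abelian //=.
  exact: subsetIr.
have keyH : forall H : {group gT}, H \proper G -> ~~ abelian H ->
    ~~ (p ^ m %| exponent H)%N.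
  move=> H prH nabH; apply/negP => dvdH.
  have sHG := proper_sub prH.
  have m0 : (0 < m)%N by apply: leq_trans m1.
  have [x xH] := @biglcm_pfactor _ _ _ p m pp m0 (fun x _ => order_gt0 x) dvdH.
  case/dvdnP => k ox.
  have k0 : (0 < k)%N by move: (order_gt0 x); rewrite ox muln_gt0 => /andP[].
  have oy : #[x ^+ k] = (p ^ m)%N by rewrite orderXdiv ox ?dvdn_mulr // mulKn.
  set y := x ^+ k in oy.
  have yH : y \in H by rewrite groupX.
  have yP : y \in P.
    rewrite (mem_normal_Hall sylP nPG) ?(subsetP sHG) //.
    by rewrite /p_elt oy pnatX pnat_id.
  have [c [a [cC aA dy _]]] := mem_dprod defP yP.
  have m1' : (0 < m.-1)%N by rewrite -ltnS prednK // ltnW.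
  have aexp : a ^+ (p ^ m.-1) = 1.
    apply/eqP; rewrite -order_dvdn; apply: dvdn_trans (dvdn_exponent aA) _.
    move: abelA; rewrite (abelemE A pp) => /andP[_ eA].
    exact: dvdn_trans eA (dvdn_exp m1' _).
  have cca : commute c a by apply: (centsP abP); [exact: (subsetP sCP) | exact: (subsetP sAP)].
  have ltm : ~~ (m <= m.-1)%N by rewrite -ltnNge prednK // ltnW.
  have cexp : c ^+ (p ^ m.-1) != 1.
    apply/eqP => ce; move: ltm; rewrite -(dvdn_Pexp2l _ _ (prime_gt1 pp)) -oy.
    by rewrite order_dvdn dy expgMn // ce aexp mulg1 eqxx.
  have oc : #[c] = (p ^ m)%N.
    have := order_dvdG cC; rewrite cardC => /(dvdn_pfactor _ _ pp)[j lej ocj].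
    case: (ltnP j m) => [ltj|gej]; last by rewrite ocj; congr (_ ^ _)%N; apply/eqP; rewrite eqn_leq lej gej.
    case/eqP: cexp; apply/eqP; rewrite -order_dvdn ocj dvdn_Pexp2l ?prime_gt1 //.
    by rewrite -ltnS prednK // ltnW.
  have defC : <[c]> = C.
    by apply/eqP; rewrite eqEcard cycle_subG cC -orderE oc cardC leqnn.
  have nCH : ~~ (H \subset 'C(P)).
    apply: contra nabH => cHP; apply: abelianS abN.
    by rewrite -defN subsetI sHG.
  have defHP : H <*> P = G.
    apply: L1; first by rewrite join_subG sHG.
      exact: joing_subr.
    by apply: contra nCH; apply: subset_trans; apply: joing_subl.
  have ntB : H :&: A != 1.
    apply: contra nabH => /eqP B1; apply/derG1P; apply/trivgP; rewrite -B1.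
    by rewrite subsetI der_sub (subset_trans (dergS 1 sHG)).
  have nBG : G \subset 'N(H :&: A).
    rewrite -defHP join_subG normsI ?normG ?(subset_trans sHG) //=.
    by apply: sub_abelian_norm => //; rewrite (subset_trans (subsetIr _ _)).
  have defB : (H :&: A)%G :=: A.
    by apply: minA; rewrite ?subsetIr // ntB astabsJ (subset_trans sQG).
  have sAH : A \subset H by rewrite -defB subsetIl.
  have cH : c \in H by rewrite -(mulgK a c) -dy groupM ?groupV // (subsetP sAH).
  have sPH : P \subset H by rewrite -eqCA mul_subG // -defC cycle_subG.
  by move: prH; rewrite -defHP (joing_idPl sPH) properxx.
rewrite /exponent_critical; apply/eqP => E.
have : (p ^ m %| exponent G)%N.
  by have := exponent_cyclic cycC; rewrite cardC => <-; exact: exponentS (subset_trans sCP sPG).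
rewrite E => /biglcm_pfactor.
case=> //; first by apply: leq_trans m1.
  by move=> H _; apply: exponent_gt0.
move=> H /andP[prH nabH]; apply/negP; exact: keyH.
Qed.
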